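(* Let $\theta\in\mathbb{R}^n$ be a vector with each entry $\theta_i\in\{0,1\}$, $i=1,\dots,n$. Let $\Theta=\mathrm{Diag}(\theta)$ and $\Sigma=I_n-\Theta$. Then for any matrix $H\in\mathbb{R}^{m\times n}$, \[ I_n-[\Theta\ H^T]\left(\begin{bmatrix}\Theta\\ H\end{bmatrix}[\Theta\ H^T]\right)^{\dagger}\begin{bmatrix}\Theta\\ H\end{bmatrix}=\Sigma-\Sigma H^T(H\Sigma H^T)^{\dagger}H\Sigma . \]
   Context: $\mathrm{Diag}(y)$ is the diagonal matrix with diagonal $y$; $I_n$ is the $n\times n$ identity; $N^\dagger$ is the Moore–Penrose pseudo-inverse of $N$. *)

(* Defs.v *)
From HB Require Import structures.
From mathcomp Require Import all_boot all_order all_algebra.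
From Stdlib Require Import ClassicalEpsilon.
Set Implicit Arguments. Unset Strict Implicit. Unset Printing Implicit Defensive.
Import Order.TTheory GRing.Theory Num.Theory.
Local Open Scope ring_scope.

(* The four Penrose conditions: X is the Moore-Penrose pseudo-inverse of A
   (real matrices, so the adjoint is the transpose). *)
Definition penrose (R : realFieldType) (p q : nat)
    (A : 'M[R]_(p, q)) (X : 'M[R]_(q, p)) : Prop :=
  [/\ A *m X *m A = A,
      X *m A *m X = X,
      (A *m X)^T = A *m X &
      (X *m A)^T = X *m A].

(* Moore-Penrose pseudo-inverse: the (unique, always existing) matrix
   satisfying the Penrose conditions, selected by Hilbert's epsilon. *)
Definition mp_pinv (R : realFieldType) (p q : nat) (A : 'M[R]_(p, q)) : 'M[R]_(q, p) :=
  epsilon (inhabits 0) (fun X => penrose A X).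

(* Main.v *)
Require Import Defs.
From HB Require Import structures.
From mathcomp Require Import all_boot all_order all_algebra.
From Stdlib Require Import ClassicalEpsilon.
Import Order.TTheory GRing.Theory Num.Theory.
Local Open Scope ring_scope.

Local Set Implicit Arguments.
Section Aux.
Variable R : realFieldType.

Lemma trmx_mul_self0 (p q : nat) (E : 'M[R]_(p, q)) : E^T *m E = 0 -> E = 0.
Proof.
move=> h; apply/matrixP => i j.
have := congr1 (fun M : 'M[R]_q => M j j) h; rewrite !mxE => /eqP.
rewrite psumr_eq0; last by move=> k _; rewrite mxE -expr2 sqr_ge0.
move=> /allP /(_ i (mem_index_enum _)); rewrite mxE -expr2 sqrf_eq0 => /eqP ->.
by [].

Qed.

Lemma ginv_left (p q : nat) (A : 'M[R]_(p, q)) (X : 'M[R]_p) :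
  A *m A^T *m X *m (A *m A^T) = A *m A^T -> A^T *m X *m (A *m A^T) = A^T.
Proof.
move=> hX; move: (hX); rewrite !mulmxA => hX'.
set E := A^T *m X *m (A *m A^T) - A^T.
have hAE : A *m E = 0.
  by rewrite /E mulmxBr !mulmxA hX' subrr.
have eE : E = A^T *m (X *m (A *m A^T) - 1%:M).
  by rewrite /E mulmxBr mulmx1 !mulmxA.
have : E^T *m E = 0.
  by rewrite {1}eE trmx_mul trmxK -mulmxA hAE mulmx0.
by move/trmx_mul_self0; rewrite /E => /eqP; rewrite subr_eq0 -(mulmxA _ A) => /eqP.
Qed.

Lemma ginv_tr (p q : nat) (A : 'M[R]_(p, q)) (X : 'M[R]_p) :
  A *m A^T *m X *m (A *m A^T) = A *m A^T ->
  A *m A^T *m X^T *m (A *m A^T) = A *m A^T.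
Proof.
move=> hX; have := congr1 trmx hX.
by rewrite !trmx_mul !trmxK !mulmxA.
Qed.

Lemma ginv_right (p q : nat) (A : 'M[R]_(p, q)) (X : 'M[R]_p) :
  A *m A^T *m X *m (A *m A^T) = A *m A^T -> A *m A^T *m X *m A = A.
Proof.
move=> /ginv_tr /ginv_left h; have := congr1 trmx h.
by rewrite !trmx_mul !trmxK !mulmxA.
Qed.

Lemma proj_uniq (p q : nat) (A : 'M[R]_(p, q)) (P Q : 'M[R]_q)
  (Z : 'M[R]_(q, p)) (Y : 'M[R]_(p, q)) :
  P = Z *m A -> A *m Q = A -> Q = A^T *m Y -> P *m A^T = A^T -> P = Q.
Proof.
move=> hP hAQ hQ hPA.
have e1 : P *m Q = P by rewrite {1}hP -mulmxA hAQ -hP.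
have e2 : P *m Q = Q by rewrite {1}hQ mulmxA hPA -hQ.
by rewrite -e1 e2.
Qed.

Lemma proj_sym (p q : nat) (A : 'M[R]_(p, q)) (X : 'M[R]_p) :
  A *m A^T *m X *m (A *m A^T) = A *m A^T ->
  (A^T *m X *m A)^T = A^T *m X *m A.
Proof.
move=> hX; symmetry.
apply: (@proj_uniq _ _ A _ _ (A^T *m X) (X^T *m A)).
- by [].
- rewrite !trmx_mul trmxK !mulmxA; apply: ginv_right; exact: ginv_tr.
- by rewrite !trmx_mul trmxK mulmxA.
- by rewrite -(mulmxA (A^T *m X)) ginv_left.
Qed.

Lemma penrose_exists (p q : nat) (A : 'M[R]_(p, q)) : exists X, penrose A X.
Proof.
set G1 := pinvmx (A *m A^T); set G2 := pinvmx (A^T *m A).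
have h1 : A *m A^T *m G1 *m (A *m A^T) = A *m A^T by rewrite mulmxKpV.
have h2 : A^T *m A^T^T *m G2 *m (A^T *m A^T^T) = A^T *m A^T^T.
  by rewrite trmxK mulmxKpV.
clearbody G1 G2.
have a_l : A^T *m G1 *m A *m A^T = A^T.
  by rewrite -(mulmxA _ A) ginv_left.
have b_l : A *m A^T *m G1 *m A = A by exact: ginv_right.
have c_l : A *m G2 *m A^T *m A = A.
  by have := ginv_left h2; rewrite !trmxK => h; rewrite -(mulmxA (A *m G2)) h.
have c_r : A *m (G2 *m (A^T *m A)) = A by rewrite !mulmxA c_l.
have symPr : (A^T *m G1 *m A)^T = A^T *m G1 *m A by exact: proj_sym.
have symPc : (A *m G2 *m A^T)^T = A *m G2 *m A^T.
  by have := proj_sym h2; rewrite trmxK.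
exists (A^T *m G1 *m A *m G2 *m A^T).
have hXA : A^T *m G1 *m A *m G2 *m A^T *m A = A^T *m G1 *m A.
  by rewrite -!mulmxA c_r.
have hAX : A *m (A^T *m G1 *m A *m G2 *m A^T) = A *m G2 *m A^T.
  by rewrite !mulmxA b_l.
split.
- by rewrite hAX c_l.
- by rewrite hXA !mulmxA a_l.
- by rewrite hAX symPc.
- by rewrite hXA symPr.
Qed.

Lemma mp_pinv_g (p q : nat) (A : 'M[R]_(p, q)) :
  A *m mp_pinv A *m A = A.
Proof.
rewrite /mp_pinv; have [X hX] := penrose_exists A.
by have [] := epsilon_spec (inhabits 0) (fun X => penrose A X) (ex_intro _ X hX).
Qed.

End Aux.
Local Unset Implicit Arguments.

Theorem proposition2p5 (R : realFieldType) (m n : nat) (theta : 'rV[R]_n)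
  (H : 'M[R]_(m, n)) :
  (forall i, theta 0 i = 0 \/ theta 0 i = 1) ->
  let Theta := diag_mx theta in
  let Sigma := 1%:M - Theta in
  1%:M - row_mx Theta H^T *m mp_pinv (col_mx Theta H *m row_mx Theta H^T)
         *m col_mx Theta H
  = Sigma - Sigma *m H^T *m mp_pinv (H *m Sigma *m H^T) *m H *m Sigma.
Proof.
move=> htheta Theta Sigma.
have tT : Theta^T = Theta by rewrite tr_diag_mx.
have TT : Theta *m Theta = Theta.
  apply/matrixP => i j; rewrite mul_diag_mx !mxE.
  case: (eqVneq i j) => [->|ne]; last by rewrite mulr0n mulr0.
  by rewrite mulr1n; case: (htheta j) => ->; rewrite ?mulr0 ?mulr1.
have tS : Sigma^T = Sigma by rewrite /Sigma linearB /= trmx1 tT.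
have TS : Theta *m Sigma = 0 by rewrite /Sigma mulmxBr mulmx1 TT subrr.
have ST : Sigma *m Theta = 0 by rewrite /Sigma mulmxBl mul1mx TT subrr.
have SS : Sigma *m Sigma = Sigma by rewrite {1}/Sigma mulmxBl mul1mx TS subr0.
set M := col_mx Theta H.
set N := H *m Sigma.
have eMT : row_mx Theta H^T = M^T by rewrite /M tr_col_mx tT.
have eNT : N^T = Sigma *m H^T by rewrite /N trmx_mul tS.
have eNN : H *m Sigma *m H^T = N *m N^T.
  by rewrite eNT /N -!mulmxA (mulmxA Sigma) SS.
have eR : Sigma *m H^T *m mp_pinv (N *m N^T) *m H *m Sigma
          = N^T *m mp_pinv (N *m N^T) *m N by rewrite /N eNT !mulmxA.
rewrite eMT eNN eR.
set X := mp_pinv (M *m M^T); set X' := mp_pinv (N *m N^T).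
have hX : M *m M^T *m X *m (M *m M^T) = M *m M^T by rewrite mp_pinv_g.
have hX' : N *m N^T *m X' *m (N *m N^T) = N *m N^T by rewrite mp_pinv_g.
have hTN : Theta *m N^T = 0 by rewrite eNT mulmxA TS mul0mx.
have eH : H = H *m Theta + N by rewrite /N -mulmxDr /Sigma addrC subrK mulmx1.
have hNP : N *m N^T *m X' *m N = N by exact: ginv_right.
have hHN : H *m N^T = N *m N^T.
  by rewrite {1}eH mulmxDl -mulmxA hTN mulmx0 add0r.
clearbody N X'.
have key : M^T *m X *m M = Theta + N^T *m X' *m N.
  apply: (@proj_uniq _ _ _ M _ _ (M^T *m X)
           (col_mx (1%:M - H^T *m X' *m N) (X' *m N))).
  - by [].
  - rewrite /M mul_col_mx; congr col_mx.
      by rewrite mulmxDr TT !mulmxA hTN !mul0mx addr0.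
    by rewrite mulmxDr !mulmxA hHN hNP -eH.
  - rewrite /M tr_col_mx tT mul_row_col mulmxBr mulmx1 eNT /Sigma mulmxBl mul1mx.
    by rewrite !mulmxBl !mulmxA addrA addrAC.
  - by rewrite -(mulmxA (M^T *m X)) ginv_left.
by rewrite key /Sigma opprD addrA.
Qed.
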